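(* Let $\mathcal{A}\in\mathbb{C}^{I_{1\ldots N}\times I_{1\ldots N}}$ and let $\mathcal{N}\in\mathbb{C}^{I_{1\ldots N}\times I_{1\ldots N}}$ be a Hermitian positive definite tensor. If $\mathcal{A}$ is weighted normal, i.e. $\mathcal{A}^{\#}_{\mathcal{N}\mathcal{N}}*_N\mathcal{A}=\mathcal{A}*_N\mathcal{A}^{\#}_{\mathcal{N}\mathcal{N}}$, then $\mathcal{A}*_N\mathcal{A}^{\dagger}_{\mathcal{N},\mathcal{N}}=\mathcal{A}^{\dagger}_{\mathcal{N},\mathcal{N}}*_N\mathcal{A}$.
   Context: Write $I_{1\ldots N}$ for $I_1\times\cdots\times I_N$. Einstein product: $(\mathcal{A}*_N\mathcal{B})_{i_1\ldots i_Nj_1\ldots j_N}=\sum_{k_1,\ldots,k_N}a_{i_1\ldots i_Nk_1\ldots k_N}b_{k_1\ldots k_Nj_1\ldots j_N}$. $\mathcal{A}^H$ is the conjugate transpose. Inverses are with respect to $*_N$ and the identity tensor (entry 1 where the two index blocks coincide, 0 otherwise). $\mathcal{N}$ is Hermitian positive definite if $\mathcal{N}^H=\mathcal{N}$ and $\mathcal{X}^H*_N\mathcal{N}*_N\mathcal{X}>0$ for all nonzero $\mathcal{X}$. Weighted conjugate transpose: $\mathcal{A}^{\#}_{\mathcal{N}\mathcal{N}}=\mathcal{N}^{-1}*_N\mathcal{A}^H*_N\mathcal{N}$. Weighted Moore-Penrose inverse $\mathcal{A}^{\dagger}_{\mathcal{N},\mathcal{N}}$: the unique $\mathcal{X}$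 with $\mathcal{A}*_N\mathcal{X}*_N\mathcal{A}=\mathcal{A}$, $\mathcal{X}*_N\mathcal{A}*_N\mathcal{X}=\mathcal{X}$, $(\mathcal{N}*_N\mathcal{A}*_N\mathcal{X})^H=\mathcal{N}*_N\mathcal{A}*_N\mathcal{X}$, $(\mathcal{N}*_N\mathcal{X}*_N\mathcal{A})^H=\mathcal{N}*_N\mathcal{X}*_N\mathcal{A}$. *)

(* Defs.v *)
From HB Require Import structures.
From mathcomp Require Import all_boot all_order all_algebra.
From mathcomp Require Export complex.
Set Implicit Arguments. Unset Strict Implicit. Unset Printing Implicit Defensive.
Import Order.TTheory GRing.Theory Num.Theory.
Local Open Scope ring_scope.

Section Tensors.
Variable R : rcfType.
Local Notation C := (R[i])%C.

Definition idx (N : nat) (I : 'I_N -> nat) : finType :=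
  {dffun forall k : 'I_N, 'I_(I k)}.

Variables (N : nat) (I : 'I_N -> nat).
Local Notation T := (idx I).

(* A tensor in C^{I_1..N x I_1..N}: entry a_{i_1..i_N j_1..j_N} = A i j. *)
Definition tensor := T -> T -> C.

Definition einstein (A B : tensor) : tensor :=
  fun i j => \sum_(k : T) A i k * B k j.

Definition tid : tensor := fun i j => if i == j then 1 else 0.

Definition tconjT (A : tensor) : tensor := fun i j => (A j i)^*.

(* inverse with respect to *_N, via the matrix unfolding of T x T *)
Definition tmx (A : tensor) : 'M[C]_#|T| :=
  \matrix_(i, j) A (enum_val i) (enum_val j).
Definition tinv (A : tensor) : tensor :=
  fun i j => invmx (tmx A) (enum_rank i) (enum_rank j).

Definition hpd (M : tensor) : Prop :=
  tconjT M = M /\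
  forall x : T -> C, (exists i, x i != 0) ->
    0 < \sum_(i : T) \sum_(j : T) (x i)^* * M i j * x j.

Definition wconjT (M A : tensor) : tensor :=
  einstein (einstein (tinv M) (tconjT A)) M.

Definition is_wmpi (M A X : tensor) : Prop :=
  [/\ einstein (einstein A X) A = A,
      einstein (einstein X A) X = X,
      tconjT (einstein M (einstein A X)) = einstein M (einstein A X) &
      tconjT (einstein M (einstein X A)) = einstein M (einstein X A)].

End Tensors.

(* Main.v *)
From Stdlib Require Import FunctionalExtensionality.
Require Import Defs.
From mathcomp Require Import all_boot all_order all_algebra complex.
Import Order.TTheory GRing.Theory Num.Theory.
Set Implicit Arguments. Unset Strict Implicit.
Local Open Scope ring_scope.
Section S.
Variable C : numClosedFieldType.
Definition Hm m p (B : 'M[C]_(m,p)) : 'M_(p,m) := (map_mx Num.conj B)^T.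
Lemma HmM m p q (B : 'M[C]_(m,p)) (D : 'M_(p,q)) : Hm (B *m D) = Hm D *m Hm B.
Proof. by rewrite /Hm map_mxM trmx_mul. Qed.
Lemma HmK m p (B : 'M[C]_(m,p)) : Hm (Hm B) = B.
Proof. by apply/matrixP=> i j; rewrite !mxE conjCK. Qed.
Lemma HmD m p (B D : 'M[C]_(m,p)) : Hm (B + D) = Hm B + Hm D.
Proof. by rewrite /Hm map_mxD linearD. Qed.
Lemma HmN m p (B : 'M[C]_(m,p)) : Hm (- B) = - Hm B.
Proof. by rewrite /Hm map_mxN linearN. Qed.
Lemma Hm1 n : Hm (1 : 'M[C]_n) = 1.
Proof. by rewrite /Hm map_mx1 trmx1. Qed.
Lemma Hm0 m p : Hm (0 : 'M[C]_(m,p)) = 0.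
Proof. by rewrite /Hm map_mx0 trmx0. Qed.

Section Core.
Variables (n : nat) (Mm : 'M[C]_n).
Hypothesis hM : Hm Mm = Mm.
Hypothesis uM : Mm \in unitmx.
Hypothesis pd : forall p (Z : 'M[C]_(n,p)), Hm Z *m Mm *m Z = 0 -> Z = 0.
Let Mi := invmx Mm.
Lemma cMiM m (W : 'M[C]_(m,n)) : W *m Mi *m Mm = W.
Proof. by rewrite -mulmxA mulVmx // mulmx1. Qed.
Lemma cMMi m (W : 'M[C]_(m,n)) : W *m Mm *m Mi = W.
Proof. by rewrite -mulmxA mulmxV // mulmx1. Qed.
Lemma HMi : Hm Mi = Mi.
Proof.
have h : Hm Mi *m Mm = 1 by rewrite -{1}hM -HmM mulmxV // Hm1.
by rewrite -[Hm Mi]cMMi h mul1mx.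
Qed.
Lemma Y0 (Y : 'M[C]_n) : Y *m Mi *m Hm Y *m Mm = 0 -> Y = 0.
Proof.
move=> h.
have h2 : Y *m Mi *m Hm Y = 0 by rewrite -[_ *m Hm Y]cMMi h mul0mx.
have : Mi *m Hm Y = 0.
  apply: pd; rewrite !HmM HMi HmK !mulmxA cMiM; exact: h2.
move=> h3; rewrite -[Y]HmK -[Hm Y]mul1mx -(mulmxV uM) -mulmxA h3 mulmx0 Hm0 //.
Qed.

Theorem core (A X : 'M[C]_n) :
  A *m X *m A = A -> X *m A *m X = X ->
  Hm (Mm *m (A *m X)) = Mm *m (A *m X) ->
  Hm (Mm *m (X *m A)) = Mm *m (X *m A) ->
  Mi *m Hm A *m Mm *m A = A *m (Mi *m Hm A *m Mm) ->
  A *m X = X *m A.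
Proof.
move=> h1 h2 h3 h4 hn.
set P := A *m X; set Q := X *m A; set Ad := Mi *m Hm A *m Mm.
have hP : forall m (W : 'M_(m,n)), W *m Hm P *m Mm = W *m Mm *m P.
  have e : Hm P *m Mm = Mm *m P by rewrite -{1}hM -HmM h3.
  by move=> m W; rewrite -!mulmxA e.
have hQ : forall m (W : 'M_(m,n)), W *m Hm Q *m Mm = W *m Mm *m Q.
  have e : Hm Q *m Mm = Mm *m Q by rewrite -{1}hM -HmM h4.
  by move=> m W; rewrite -!mulmxA e.
have PA : P *m A = A by [].
have AQ : A *m Q = A by rewrite /Q mulmxA.
have hP' : forall m (W : 'M_(m,n)), W *m Mi *m Hm P = W *m P *m Mi.
  by move=> m W; rewrite -[LHS]cMMi hP cMiM.
have hQ' : forall m (W : 'M_(m,n)), W *m Mi *m Hm Q = W *m Q *m Mi.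
  by move=> m W; rewrite -[LHS]cMMi hQ cMiM.
have QAd : Q *m Ad = Ad.
  rewrite /Ad -{2}AQ HmM !mulmxA -[Mi]mul1mx hQ' !mul1mx.
  by rewrite ?mulmxA.
have eB : Mi *m Hm ((1 - Q) *m A) *m Mm = Ad *m (1 - Q).
  rewrite HmM HmD HmN Hm1 mulmxBr mulmx1 mulmxBr !mulmxBl !mulmxA hQ.
  by rewrite /Ad mulmxBr mulmx1 !mulmxA.
have QA : Q *m A = A.
  suff: (1 - Q) *m A = 0.
    by move/eqP; rewrite mulmxBl mul1mx subr_eq0 eq_sym => /eqP.
  have eB' : forall W : 'M_n, W *m Mi *m Hm ((1 - Q) *m A) *m Mm = W *m (Ad *m (1 - Q)).
    by move=> W; rewrite -eB !mulmxA.
  apply: Y0; rewrite eB'.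
  rewrite -mulmxA (mulmxA A) -hn !mulmxA.
  have e : (1 - Q) *m Ad = 0 by rewrite mulmxBl mul1mx QAd subrr.
  by move: e; rewrite /Ad !mulmxA => ->; rewrite !mul0mx.
have hn' : Ad *m A = A *m Ad by exact: hn.
have eC : forall W : 'M_n, W *m Mi *m Hm ((1 - P) *m Ad) *m Mm = W *m A *m (1 - P).
  move=> W; rewrite HmM /Ad !HmM hM HmK HMi HmD HmN Hm1.
  rewrite !(mulmxBr, mulmxBl, mulmx1, mulmxA) hP !cMiM.
by rewrite /P !mulmxA.
have PAd : P *m Ad = Ad.
  suff: (1 - P) *m Ad = 0.
    by move/eqP; rewrite mulmxBl mul1mx subr_eq0 eq_sym => /eqP.
  apply: Y0; rewrite eC -(mulmxA (1 - P) Ad A) hn' !mulmxA mulmxBl mul1mx PA subrr !mul0mx.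
  done.
have QP : Q *m P = P by rewrite /P mulmxA QA.
have PQ : P *m Q = Q.
  have eQ : Q = Ad *m (Mi *m Hm X *m Mm).
    have eQ0 : Q = Mi *m Hm Q *m Mm by rewrite -[Mi]mul1mx hQ' mul1mx cMiM.
    by rewrite {1}eQ0 /Q HmM /Ad !mulmxA cMMi.
  by rewrite [in LHS]eQ (mulmxA P Ad) PAd -eQ.
have eP0 : P = Mi *m Hm P *m Mm by rewrite -[Mi]mul1mx hP' mul1mx cMiM.
have e1 : Mi *m Hm P *m Mm = Mi *m Hm P *m Mm *m Q.
  by rewrite -{1}QP HmM (mulmxA Mi) hQ.
by rewrite {1}eP0 e1 -eP0 PQ.
Qed.
End Core.
End S.
Section Bridge.
Variables (R : rcfType) (N : nat) (I : 'I_N -> nat).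
Local Notation T := (idx I).
Local Notation tensor := (tensor R I).

Lemma sum_T (F : T -> R[i]) : \sum_(k : T) F k = \sum_(k < #|T|) F (enum_val k).
Proof. by rewrite (reindex (fun k : 'I_#|T| => enum_val k)) //; apply: onW_bij; exact: enum_val_bij. Qed.

Lemma tmx_inj (A B : tensor) : tmx A = tmx B -> A = B.
Proof.
move=> h; apply: functional_extensionality => i; apply: functional_extensionality => j.
by have := congr1 (fun m : 'M[R[i]]_#|T| => m (enum_rank i) (enum_rank j)) h; rewrite /= !mxE !enum_rankK.
Qed.

Lemma tmx_ein (A B : tensor) : tmx (einstein A B) = tmx A *m tmx B.
Proof.
apply/matrixP => i j; rewrite !mxE /einstein sum_T.
by apply: eq_bigr => k _; rewrite !mxE.
Qed.

Lemma tmx_conj (A : tensor) : tmx (tconjT A) = Hm (tmx A).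
Proof. by apply/matrixP => i j; rewrite !mxE. Qed.

Lemma tmx_inv (A : tensor) : tmx (tinv A) = invmx (tmx A).
Proof. by apply/matrixP => i j; rewrite !mxE /tinv !enum_valK. Qed.

Lemma tmx_pd (M : tensor) : hpd M ->
  forall p (Z : 'M[R[i]]_(#|T|,p)), Hm Z *m tmx M *m Z = 0 -> Z = 0.
Proof.
case=> _ hp p Z hZ; apply/matrixP => k c; rewrite mxE.
apply/eqP; apply/negPn/negP => nz.
have := hp (fun i => Z (enum_rank i) c).
have ex : exists i, Z (enum_rank i) c != 0 by exists (enum_val k); rewrite enum_valK.
move=> /(_ ex).
match goal with |- is_true (0 < ?S) -> _ =>
  have eS : S = (Hm Z *m tmx M *m Z) c c end.
  rewrite sum_T (eq_bigr _ (fun i _ => sum_T _)) exchange_big mxE.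
  apply: eq_bigr => j _; rewrite mxE mulr_suml; apply: eq_bigr => i _.
  by rewrite !mxE !enum_valK.
by rewrite eS hZ mxE ltxx.
Qed.
Lemma tmx_unit (M : tensor) : hpd M -> tmx M \in unitmx.
Proof.
move=> hM; rewrite unitmxE unitfE; apply/negP => /det0P [v nz hv].
have := tmx_pd hM (Z := Hm v); rewrite HmK hv mul0mx => /(_ erefl) h.
by move: nz; rewrite -[v]HmK h Hm0 eqxx.
Qed.
End Bridge.

Theorem theorem4p11 (R : rcfType) (N : nat) (I : 'I_N -> nat)
    (A M : tensor R I) :
  hpd M ->
  einstein (wconjT M A) A = einstein A (wconjT M A) ->
  forall X : tensor R I, is_wmpi M A X ->
  einstein A X = einstein X A.
Proof.
move=> hM hn X [h1 h2 h3 h4].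
have hH : Hm (tmx M) = tmx M by rewrite -tmx_conj; case: hM => ->.
apply: tmx_inj; rewrite !tmx_ein.
apply: (core hH (tmx_unit hM) (tmx_pd hM)).
- by have := congr1 (@tmx _ _ _) h1; rewrite !tmx_ein.
- by have := congr1 (@tmx _ _ _) h2; rewrite !tmx_ein.
- by have := congr1 (@tmx _ _ _) h3; rewrite tmx_conj !tmx_ein.
- by have := congr1 (@tmx _ _ _) h4; rewrite tmx_conj !tmx_ein.
- by have := congr1 (@tmx _ _ _) hn; rewrite /wconjT !tmx_ein tmx_inv tmx_conj.
Qed.
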